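(* Let $C$ be a finite acyclic category and let $F\colon C\to C$ be a functor. If $\mathrm{sd}(F)\colon\mathrm{sd}(C)\to\mathrm{sd}(C)$ fixes an element $\sigma\in\mathrm{sd}(C)$, i.e. $\mathrm{sd}(F)(\sigma)=\sigma$, then $\mathrm{sd}(F)(\tau)=\tau$ for all $\tau\le\sigma$ in $\mathrm{sd}(C)$.
   Context: An acyclic category is a small category in which only identities are invertible and the only endomorphisms are identities; finite means finitely many morphisms. The nerve $\Delta(C)$ is the regular trisp with vertices the objects of $C$ and one $k$-simplex for each chain $x_0\xrightarrow{\alpha_1}x_1\to\cdots\xrightarrow{\alpha_k}x_k$ of $k\ge1$ composable non-identity morphisms (a $0$-simplex being an object). The faces of such a simplex are the chains obtained by choosing a nonempty subset of the vertices $x_0,\dots,x_k$ (in order) and composing the morphisms between consecutive chosen vertices (e.g. deleting $x_0$, deleting $x_k$, or replacing $\alpha_j,\alpha_{j+1}$ by $\alpha_{j+1}\circ\alpha_j$). $\mathrm{sd}(C)$ is the face poset of $\Delta(C)$: its elements are the simplices, with $\tau\le\sigma$ iff $\tau$ is a face of $\sigma$. For a functor $F$, $\mathrm{sd}(F)$ sends the chain $x_0\xrightarrow{\alpha_1}\cdots\xrightarrow{\alpha_k}x_k$ to the chain $F(x_0)\xrightarrow{F(\alpha_1)}\cdots\xrightarrow{F(\alpha_k)}F(x_k)$ (the simplex of $\Delta(C)$ it determines). *)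

(* Defs.v *)
From HB Require Import structures.
From mathcomp Require Import all_boot.
Set Implicit Arguments. Unset Strict Implicit. Unset Printing Implicit Defensive.

Record category := Category {
  Obj : finType;
  Hom : Obj -> Obj -> finType;
  idm : forall x, Hom x x;
  comp : forall x y z, Hom y z -> Hom x y -> Hom x z;
  comp_id_r : forall x y (f : Hom x y), comp f (idm x) = f;
  comp_id_l : forall x y (f : Hom x y), comp (idm y) f = f;
  comp_assoc : forall x y z w (f : Hom x y) (g : Hom y z) (h : Hom z w),
      comp h (comp g f) = comp (comp h g) f
}.
Arguments idm {c}.
Arguments comp {c x y z}.

Section Cat.
Variable C : category.

Definition is_id (x y : Obj C) (f : Hom x y) : Prop :=
  exists e : x = y, f = eq_rect x (Hom x) (idm x) y e.

Definition invertible (x y : Obj C) (f : Hom x y) : Prop :=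
  exists g : Hom y x, comp g f = idm x /\ comp f g = idm y.

Definition acyclic : Prop :=
  (forall x y (f : Hom x y), invertible f -> is_id f) /\
  (forall (x : Obj C) (f : Hom x x), f = idm x).

Inductive chain : Obj C -> Type :=
  | ch0 (x : Obj C) : chain x
  | chS (x y : Obj C) (a : Hom x y) (c : chain y) : chain x.

Fixpoint nondeg (x : Obj C) (c : chain x) : Prop :=
  match c with
  | ch0 _ => True
  | chS _ _ a c' => ~ is_id a /\ nondeg c'
  end.

(** simplices of the nerve Delta(C) = elements of sd(C) *)
Definition simplex : Type := { x : Obj C & chain x }.
Definition is_simplex (s : simplex) : Prop := nondeg (projT2 s).

(** Faces: select a nonempty subset of the vertices via a bit mask
    (bit i for vertex x_i; missing bits are false) and compose the morphisms
    between consecutive selected vertices.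
    [selB p c m]: last selected vertex z, pending composite p : z -> y,
    remaining chain c starting at y (vertex y not yet decided). *)
Fixpoint selB (z y : Obj C) (p : Hom z y) (c : chain y) (m : seq bool)
  : chain z :=
  match c in chain y0 return Hom z y0 -> chain z with
  | ch0 y0 => fun p =>
      if head false m then chS p (ch0 y0) else ch0 z
  | chS y0 w a c' => fun p =>
      if head false m then chS p (selB a c' (behead m))
      else selB (comp a p) c' (behead m)
  end p.

(** nothing selected yet *)
Fixpoint selA (x : Obj C) (c : chain x) (m : seq bool) : option simplex :=
  match c with
  | ch0 x0 => if head false m then Some (existT _ x0 (ch0 x0)) else None
  | chS x0 w a c' =>
      if head false m then Some (existT _ x0 (selB a c' (behead m)))
      else selA c' (behead m)
  end.

(** tau <= sigma in sd(C): tau is a face of sigma *)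
Definition face (tau sigma : simplex) : Prop :=
  exists m : seq bool, selA (projT2 sigma) m = Some tau.

End Cat.

Arguments chain : clear implicits.
Arguments ch0 {C}.
Arguments chS {C x y}.

Record functor (C : category) := Functor {
  Fobj : Obj C -> Obj C;
  Fmor : forall x y, Hom x y -> Hom (Fobj x) (Fobj y);
  Fmor_id : forall x, Fmor (idm x) = idm (Fobj x);
  Fmor_comp : forall x y z (f : Hom x y) (g : Hom y z),
      Fmor (comp g f) = comp (Fmor g) (Fmor f)
}.
Arguments Fobj {C}.
Arguments Fmor {C} _ {x y}.

Section SdF.
Variables (C : category) (F : functor C).

(** prepend a to r, dropping a if it is an identity morphism (so that a chain
    containing identities is replaced by the simplex it determines) *)
Definition cons_nd (x y : Obj C) (a : Hom x y) (r : chain C y) : chain C x :=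
  match y =P x with
  | ReflectT e =>
      if eq_rect y (Hom x) a x e == idm x then eq_rect y (chain C) r x e
      else chS a r
  | ReflectF _ => chS a r
  end.

Fixpoint map_chain (x : Obj C) (c : chain C x) : chain C (Fobj F x) :=
  match c with
  | ch0 x0 => ch0 (Fobj F x0)
  | chS _ _ a c' => cons_nd (Fmor F a) (map_chain c')
  end.

Definition sdF (s : simplex C) : simplex C :=
  existT _ (Fobj F (projT1 s)) (map_chain (projT2 s)).
End SdF.

(* Main.v *)
Require Import Defs.
From mathcomp Require Import all_boot.
From Stdlib Require Import Eqdep_dec.

Set Implicit Arguments. Unset Strict Implicit. Unset Printing Implicit Defensive.

Section Proof.
Variables (C : category) (F : functor C).

Definition Arr := {p : (Obj C * Obj C)%type & Hom p.1 p.2}.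
Definition mkA (x y : Obj C) (f : Hom x y) : Arr :=
  existT (fun p : (Obj C * Obj C)%type => Hom p.1 p.2) (x, y) f.
Definition FA (a : Arr) : Arr := mkA (Fmor F (projT2 a)).
Definition nd (a : Arr) : bool := (projT1 a).1 != (projT1 a).2.

Fixpoint arrows (x : Obj C) (c : chain C x) : seq Arr :=
  match c with
  | ch0 _ => [::]
  | chS _ _ a c' => mkA a :: arrows c'
  end.

Lemma mkA_inj (x y : Obj C) (f f' : Hom x y) : mkA f = mkA f' -> f = f'.
Proof.
move=> H. exact: (inj_pair2_eq_dec _ (@eq_comparable _) _ _ _ _ H).
Qed.

Lemma mkA_comp (x y z x' y' z' : Obj C) (f : Hom x y) (g : Hom y z)
  (f' : Hom x' y') (g' : Hom y' z') :
  mkA f = mkA f' -> mkA g = mkA g' -> mkA (Defs.comp g f) = mkA (Defs.comp g' f').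
Proof.
move=> H1 H2.
have := congr1 (@projT1 _ _) H1 => /= [[ex ey]].
have := congr1 (@projT1 _ _) H2 => /= [[_ ez]].
subst. by rewrite (mkA_inj H1) (mkA_inj H2).
Qed.

Lemma cons_eq (a b : Arr) s t : a :: s = b :: t -> a = b /\ s = t.
Proof. by move=> H; split; [exact: (congr1 (head a) H)|exact: (congr1 behead H)]. Qed.

Lemma arrows_rect (u v : Obj C) (e : u = v) (r : chain C u) :
  arrows (eq_rect u (chain C) r v e) = arrows r.
Proof. by destruct e. Qed.

Hypothesis acyc : acyclic C.

Lemma map_arrows x (c : chain C x) :
  arrows (map_chain F c) = filter nd (map FA (arrows c)).
Proof.
elim: c => [x0|x0 y a c IH] //=.
rewrite /cons_nd. case: (Fobj F y =P Fobj F x0) => [e|ne].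
  rewrite (acyc.2 _ (eq_rect _ _ _ _ e)) eqxx arrows_rect.
  have -> : nd (FA (mkA a)) = false by rewrite /nd /= e eqxx.
  exact: IH.
have -> : nd (FA (mkA a)) = true by rewrite /nd /=; apply/eqP => h; apply: ne.
by rewrite /= IH.
Qed.

Lemma simplex_eq x (c : chain C x) x' (c' : chain C x') :
  x = x' -> arrows c = arrows c' ->
  existT (fun x => chain C x) x c = existT _ x' c'.
Proof.
elim: c x' c' => [x0|x0 y a c IH] x' [x1|x1 y1 a1 c1] //= ex.
  by subst.
move=> H0.
have H1 := congr1 (head (mkA a)) H0. have H2 := congr1 behead H0.
simpl in H1, H2.
have := congr1 (@projT1 _ _) H1 => /= [[e1 e2]]. subst.
rewrite (mkA_inj H1).
have := IH _ c1 erefl H2 => H.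
by rewrite (inj_pair2_eq_dec _ (@eq_comparable _) _ _ _ _ H).
Qed.

Lemma nd_comp (z y w : Obj C) (p : Hom z y) (a : Hom y w) :
  z != y -> z != w.
Proof.
move=> nzy; apply/eqP => ezw; subst.
have [e _] : is_id p.
  apply: acyc.1; exists a; split; exact: acyc.2.
by rewrite e eqxx in nzy.
Qed.

Lemma selB_good y (c : chain C y) z (p : Hom z y) m :
  map FA (arrows c) = arrows c -> all nd (arrows c) ->
  FA (mkA p) = mkA p -> z != y ->
  map FA (arrows (selB p c m)) = arrows (selB p c m) /\
  all nd (arrows (selB p c m)).
Proof.
elim: c z p m => [y0|y0 w a c IH] z p m /= Hm Hn Hp nzy.
  case: (head false m) => //=.
  by rewrite Hp /nd /= nzy.
case/andP: Hn => nyw Hn. case/cons_eq: Hm => Ha Hm.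
case: (head false m) => /=.
  have [H1 H2] := IH _ a (behead m) Hm Hn Ha nyw.
  by rewrite Hp H1 /= H2 /nd /= nzy.
apply: IH => //.
  rewrite /FA /= Fmor_comp. exact: mkA_comp.
exact: nd_comp nzy.
Qed.

Lemma selA_good x (c : chain C x) m tau :
  map FA (arrows c) = arrows c -> all nd (arrows c) -> Fobj F x = x ->
  selA c m = Some tau ->
  Fobj F (projT1 tau) = projT1 tau /\
  map FA (arrows (projT2 tau)) = arrows (projT2 tau) /\
  all nd (arrows (projT2 tau)).
Proof.
elim: c m => [x0|x0 w a c IH] m /= Hm Hn Hx.
  by case: (head false m) => // -[<-].
case/andP: Hn => nxw Hn. case/cons_eq: Hm => Ha Hm.
case: (head false m).
  case=> <- /=; split => //. exact: selB_good.
apply: IH => //.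
by have := congr1 (@projT1 _ _) Ha => /= [[_ ->]].
Qed.

End Proof.

Theorem mainTheorem2 (C : category) (F : functor C) (sigma : simplex C) :
  acyclic C -> is_simplex sigma -> sdF F sigma = sigma ->
  forall tau : simplex C, face tau sigma -> sdF F tau = tau.
Proof.
move=> acyc _ Hfix tau [m Hm].
case: sigma Hfix Hm => x c Hfix /= Hm.
have Hx : Fobj F x = x := congr1 (@projT1 _ _) Hfix.
have Ha : filter (@nd C) (map (FA F) (arrows c)) = arrows c.
  rewrite -map_arrows //.
  exact: (congr1 (fun s : simplex C => arrows (projT2 s)) Hfix).
have Hall : all (@nd C) (map (FA F) (arrows c)).
  rewrite all_count -size_filter Ha size_map //.
have Hmap : map (FA F) (arrows c) = arrows c.
  by move/all_filterP: Hall => E; rewrite -{2}Ha E.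
have Hn : all (@nd C) (arrows c) by rewrite -Hmap.
have [H1 [H2 H3]] := selA_good acyc Hmap Hn Hx Hm.
case: tau H1 H2 H3 {Hm} => t r /= H1 H2 H3.
rewrite /sdF /=. apply: simplex_eq => //.
rewrite map_arrows // H2. exact/all_filterP.
Qed.
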